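(* If $\Phi$ is a depth-bounded fuzzy simulation between fuzzy automata $\mathcal{A}$ and $\mathcal{A}'$, then $\|\Phi\|_{\mathcal{A},\mathcal{A}'}\le S(\mathbf{L}(\mathcal{A}),\mathbf{L}(\mathcal{A}'))$.
   Context: $\mathcal{L}=\langle L,\le,\otimes,\Rightarrow,0,1\rangle$ is a complete residuated lattice: $\langle L,\le,0,1\rangle$ is a complete lattice with least element $0$ and greatest element $1$, $\langle L,\otimes,1\rangle$ is a commutative monoid, and $x\otimes y\le z$ iff $x\le (y\Rightarrow z)$. Fuzzy sets/relations are maps into $L$ ordered pointwise; $\varphi^{-1}(b,a)=\varphi(a,b)$; $(\varphi\circ\psi)(a,c)=\bigvee_b\varphi(a,b)\otimes\psi(b,c)$, $(f\circ\varphi)(b)=\bigvee_a f(a)\otimes\varphi(a,b)$, $(\varphi\circ g)(a)=\bigvee_b\varphi(a,b)\otimes g(b)$; $S(g,f)=\bigwedge_a(g(a)\Rightarrow f(a))$. A fuzzy automaton over $\Sigma$ is $\mathcal{A}=\langle A,\delta^{\mathcal{A}},\sigma^{\mathcal{A}},\tau^{\mathcal{A}}\rangle$ with $A$ nonempty, $\delta^{\mathcal{A}}:A\times\Sigma\times A\to L$, $\sigma^{\mathcal{A}},\tau^{\mathcal{A}}:A\to L$; $\delta^{\mathcal{A}}_s(x,y)=\delta^{\mathcal{A}}(x,s,y)$; similarly $\mathcal{A}'$ with states $A'$. $\mathbf{L}(\mathcal{A})(s_1\cdots s_k)=\sigma^{\mathcal{A}}\circ\delta^{\mathcal{A}}_{s_1}\circ\cdots\circ\delta^{\mathcal{A}}_{s_k}\circ\tau^{\mathcal{A}}$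 for words in $\Sigma^*$. $\|\varphi\|_{\mathcal{A},\mathcal{A}'}=S(\sigma^{\mathcal{A}},\sigma^{\mathcal{A}'}\circ\varphi^{-1})$. A depth-bounded fuzzy simulation between $\mathcal{A}$ and $\mathcal{A}'$ is a sequence $\Phi=(\varphi_n)_{n\in\mathbb{N}}$ of fuzzy relations $A\times A'\to L$ with $\varphi_n\le\varphi_{n-1}$ ($n\ge1$), $\varphi_0^{-1}\circ\tau^{\mathcal{A}}\le\tau^{\mathcal{A}'}$, and $\varphi_n^{-1}\circ\delta^{\mathcal{A}}_s\le\delta^{\mathcal{A}'}_s\circ\varphi_{n-1}^{-1}$ for all $s\in\Sigma$, $n\ge1$; its norm is $\|\Phi\|_{\mathcal{A},\mathcal{A}'}=\bigwedge_n\|\varphi_n\|_{\mathcal{A},\mathcal{A}'}$. *)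

(* Defs.v *)
From Stdlib Require Import List.
Set Implicit Arguments.
Unset Strict Implicit.

(* A complete residuated lattice <L, <=, (x), =>, 0, 1>. Arbitrary joins and
   meets are given as operations on subsets (predicates) of the carrier. *)
Record CRL := {
  car :> Type;
  le : car -> car -> Prop;
  sup : (car -> Prop) -> car;
  inf : (car -> Prop) -> car;
  zero : car;
  one : car;
  mul : car -> car -> car;
  res : car -> car -> car;
  le_refl : forall x, le x x;
  le_trans : forall x y z, le x y -> le y z -> le x z;
  le_antisym : forall x y, le x y -> le y x -> x = y;
  sup_ub : forall (P : car -> Prop) x, P x -> le x (sup P);
  sup_least : forall (P : car -> Prop) y, (forall x, P x -> le x y) -> le (sup P) y;
  inf_lb : forall (P : car -> Prop) x, P x -> le (inf P) x;
  inf_greatest : forall (P : car -> Prop) y, (forall x, P x -> le y x) -> le y (inf P);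
  zero_least : forall x, le zero x;
  one_greatest : forall x, le x one;
  mul_assoc : forall x y z, mul x (mul y z) = mul (mul x y) z;
  mul_comm : forall x y, mul x y = mul y x;
  mul_one : forall x, mul x one = x;
  adjoint : forall x y z, le (mul x y) z <-> le x (res y z)
}.

Section Ops.
Variable L : CRL.

Definition bigsup {I : Type} (f : I -> L) : L := sup (fun x => exists i, x = f i).
Definition biginf {I : Type} (f : I -> L) : L := inf (fun x => exists i, x = f i).

Definition finv {A B : Type} (phi : A -> B -> L) : B -> A -> L := fun b a => phi a b.
Definition rcomp {A B C : Type} (phi : A -> B -> L) (psi : B -> C -> L) : A -> C -> L :=
  fun a c => bigsup (fun b => mul (phi a b) (psi b c)).
Definition vrcomp {A B : Type} (f : A -> L) (phi : A -> B -> L) : B -> L :=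
  fun b => bigsup (fun a => mul (f a) (phi a b)).
Definition rvcomp {A B : Type} (phi : A -> B -> L) (g : B -> L) : A -> L :=
  fun a => bigsup (fun b => mul (phi a b) (g b)).
Definition vvcomp {A : Type} (f g : A -> L) : L := bigsup (fun a => mul (f a) (g a)).

Definition fle {A : Type} (f g : A -> L) : Prop := forall a, le (f a) (g a).
Definition rle {A B : Type} (phi psi : A -> B -> L) : Prop :=
  forall a b, le (phi a b) (psi a b).

Definition Sdeg {A : Type} (g f : A -> L) : L := biginf (fun a => res (g a) (f a)).
End Ops.

Record FAut (L : CRL) (Sigma : Type) := {
  st : Type;
  st_inh : inhabited st;
  delta : st -> Sigma -> st -> L;
  sigma : st -> L;
  tau : st -> L
}.

Arguments delta {L Sigma} f _ _ _.
Arguments sigma {L Sigma} f _.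
Arguments tau {L Sigma} f _.

Section Aut.
Variables (L : CRL) (Sigma : Type).

Definition deltas (A : FAut L Sigma) (s : Sigma) : st A -> st A -> L :=
  fun x y => delta A x s y.

(* L(A)(s1...sk) = sigma o delta_s1 o ... o delta_sk o tau *)
Definition lang (A : FAut L Sigma) (w : list Sigma) : L :=
  vvcomp (fold_left (fun f s => vrcomp f (@deltas A s)) w (sigma A)) (tau A).

Definition rel_norm (A A' : FAut L Sigma) (phi : st A -> st A' -> L) : L :=
  Sdeg (sigma A) (vrcomp (sigma A') (finv phi)).

Definition depth_bounded_sim (A A' : FAut L Sigma)
    (Phi : nat -> st A -> st A' -> L) : Prop :=
  (forall n, rle (Phi (S n)) (Phi n)) /\
  fle (rvcomp (finv (Phi 0)) (tau A)) (tau A') /\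
  (forall (s : Sigma) n,
     rle (rcomp (finv (Phi (S n))) (@deltas A s))
         (rcomp (@deltas A' s) (finv (Phi n)))).

Definition dbs_norm (A A' : FAut L Sigma) (Phi : nat -> st A -> st A' -> L) : L :=
  biginf (fun n => @rel_norm A A' (Phi n)).
End Aut.
Arguments deltas {L Sigma} A s _ _.
Arguments depth_bounded_sim {L Sigma} A A' Phi.
Arguments dbs_norm {L Sigma} A A' Phi.
Arguments rel_norm {L Sigma} A A' phi.

(* Main.v *)
Require Import Defs.
From Stdlib Require Import List.

Section H.
Variable L : CRL.

Lemma le_mulr (x y z : L) : le x y -> le (mul z x) (mul z y).
Proof.
  intro H. rewrite (mul_comm z x). apply (proj2 (adjoint _ _ _)).
  apply le_trans with y; auto. apply (proj1 (adjoint _ _ _)).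
  rewrite mul_comm. apply le_refl.
Qed.

Lemma le_mull (x y z : L) : le x y -> le (mul x z) (mul y z).
Proof. intro H. rewrite (mul_comm x), (mul_comm y). now apply le_mulr. Qed.

Lemma sup_mul_l {I : Type} (c : L) (f : I -> L) y :
  (forall i, le (mul (f i) c) y) -> le (mul (bigsup f) c) y.
Proof.
  intro H. apply (proj2 (adjoint _ _ _)). apply sup_least.
  intros x [i ->]. apply (proj1 (adjoint _ _ _)). auto.
Qed.

Lemma sup_mul_r {I : Type} (c : L) (f : I -> L) y :
  (forall i, le (mul c (f i)) y) -> le (mul c (bigsup f)) y.
Proof.
  intro H. rewrite mul_comm. apply sup_mul_l. intro i. rewrite mul_comm; auto.
Qed.

Lemma le_bigsup {I : Type} (f : I -> L) i x : le x (f i) -> le x (bigsup f).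
Proof. intro H. apply le_trans with (f i); auto. apply sup_ub. exists i; reflexivity. Qed.

Lemma biginf_lb' {I : Type} (f : I -> L) i : le (biginf f) (f i).
Proof. apply inf_lb. exists i; reflexivity. Qed.
End H.

Lemma key (L : CRL) (Sigma : Type) (A A' : FAut L Sigma)
    (Phi : nat -> st A -> st A' -> L) :
  fle (rvcomp (finv (Phi 0)) (tau A)) (tau A') ->
  (forall (s : Sigma) n,
     rle (rcomp (finv (Phi (S n))) (deltas A s))
         (rcomp (deltas A' s) (finv (Phi n)))) ->
  forall w f f' (c : L),
  (forall a, le (mul c (f a)) (vrcomp f' (finv (Phi (length w))) a)) ->
  le (mul c (vvcomp (fold_left (fun f s => vrcomp f (deltas A s)) w f) (tau A)))
     (vvcomp (fold_left (fun f s => vrcomp f (deltas A' s)) w f') (tau A')).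
Proof.
  intros Ht Hd w. induction w as [|s u IH]; intros f f' c Hc; simpl in *.
  - unfold vvcomp. apply sup_mul_r; intro a. rewrite mul_assoc.
    apply le_trans with (mul (vrcomp f' (finv (Phi 0)) a) (tau A a)).
    + apply le_mull; auto.
    + unfold vrcomp. apply sup_mul_l; intro a'.
      apply le_bigsup with a'. rewrite <- mul_assoc. apply le_mulr.
      apply le_trans with (2 := Ht a'). unfold rvcomp, finv.
      apply le_bigsup with a. apply le_refl.
  - apply IH. intro b. unfold vrcomp at 1. apply sup_mul_r; intro a.
    rewrite mul_assoc.
    apply le_trans with (mul (vrcomp f' (finv (Phi (S (length u)))) a) (deltas A s a b)).
    + apply le_mull; auto.
    + unfold vrcomp at 1. apply sup_mul_l; intro a'.
      rewrite <- mul_assoc.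
      apply le_trans with (mul (f' a') (rcomp (deltas A' s) (finv (Phi (length u))) a' b)).
      * apply le_mulr. apply le_trans with (2 := Hd s (length u) a' b).
        unfold rcomp, finv. apply le_bigsup with a. apply le_refl.
      * unfold rcomp. apply sup_mul_r; intro b'.
        unfold vrcomp. apply le_bigsup with b'. rewrite mul_assoc.
        apply le_mull. apply le_bigsup with a'. apply le_refl.
Qed.

Theorem mainTheorem7 (L : CRL) (Sigma : Type) (A A' : FAut L Sigma)
    (Phi : nat -> st A -> st A' -> L) :
  depth_bounded_sim A A' Phi ->
  le (dbs_norm A A' Phi) (Sdeg (lang A) (lang A')).
Proof.
  intros [_ [Ht Hd]]. unfold Sdeg. apply inf_greatest. intros x [w ->].
  apply (proj1 (adjoint _ _ _)). unfold lang.
  apply (@key L Sigma A A' Phi Ht Hd). intro a. apply (proj2 (adjoint _ _ _)).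
  apply le_trans with (rel_norm A A' (Phi (length w))).
  - unfold dbs_norm. apply (@biginf_lb' L _ (fun n => rel_norm A A' (Phi n))).
  - unfold rel_norm, Sdeg. apply (@biginf_lb' L _ (fun a0 => res (sigma A a0) _)).
Qed.
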